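(* Let $i\ne j$ be agents and $\chi_i(0),\chi_j(0)>0$ with $\chi_i(0)+\chi_j(0)\le1$ such that $$\lim_{N\to\infty}\frac{\sum_{k=\chi_i(0)N}^\infty 1/F_i(k)}{\sum_{k=\chi_j(0)N}^\infty 1/F_j(k)}=1. \qquad (\ast)$$ (1) If there is $C<\infty$ with $\frac1kF_i(k)\sum_{l=k}^\infty\frac1{F_i(l)}\le C$ for all $k\in\mathbb{N}$, then for every $\epsilon>0$ $$\limsup_{N\to\infty}\frac{\sum_{k=(\chi_i(0)+\epsilon)N}^\infty 1/F_i(k)}{\sum_{k=\chi_j(0)N}^\infty 1/F_j(k)}<1 .$$ (2) If $\lim_{k\to\infty}\frac1kF_i(k)\sum_{l=k}^\infty\frac1{F_i(l)}=\infty$ and $(\ast)$ holds for one choice of $\chi_i(0),\chi_j(0)$, then $(\ast)$ holds for all choices $\chi_i(0),\chi_j(0)>0$ with $\chi_i(0)+\chi_j(0)\le1$.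
   Context: Feedback functions $F_i,F_j:\mathbb{N}\to(0,\infty)$ with $\sum_k 1/F_i(k)<\infty$ and $\sum_k1/F_j(k)<\infty$. Sums whose lower limit $xN$ is non-integer start at the rounded value. *)

(* Defs.v *)
From Stdlib Require Import Reals ZArith.
From Coquelicot Require Import Coquelicot.
Open Scope R_scope.

(* Rounding to the nearest natural number: floor (x + 1/2), clipped at 0. *)
Definition round_nat (x : R) : nat := Z.to_nat (up (x + / 2) - 1)%Z.

Definition tail (F : nat -> R) (m : nat) : R :=
  Series (fun n => / F (m + n)%nat).

Definition tailR (F : nat -> R) (x : R) : R := tail F (round_nat x).

Definition feedback (F : nat -> R) : Prop :=
  (forall k, 0 < F k) /\ ex_series (fun k => / F k).

Definition ratio_cond (Fi Fj : nat -> R) (a b : R) : Prop :=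
  is_lim_seq (fun N => tailR Fi (a * INR N) / tailR Fj (b * INR N)) 1.

(* Main.v *)
Require Import Defs.
From Stdlib Require Import Reals Lra Lia ZArith.
From Coquelicot Require Import Coquelicot.
Open Scope R_scope.

Lemma tail_ex F m : feedback F -> ex_series (fun n => / F (m + n)%nat).
Proof. intros [_ H]. now apply (ex_series_incr_n (fun k => / F k) m). Qed.

Lemma tail_step F m : feedback F -> tail F m = / F m + tail F (S m).
Proof.
  intros HF. unfold tail. rewrite Series_incr_1 by now apply tail_ex.
  rewrite Nat.add_0_r. f_equal. apply Series_ext. intros n. f_equal. f_equal. lia.
Qed.

Lemma tail_nonneg F m : feedback F -> 0 <= tail F m.
Proof.
  intros HF. unfold tail.
  assert (H := Series_le (fun n => 0 * / F (m+n)%nat) (fun n => / F (m+n)%nat)).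
  rewrite Series_scal_l, Rmult_0_l in H. apply H; [|now apply tail_ex].
  intros n; rewrite Rmult_0_l; split; [lra|]. left. apply Rinv_0_lt_compat, HF.
Qed.

Lemma tail_pos F m : feedback F -> 0 < tail F m.
Proof.
  intros HF. rewrite tail_step by easy.
  assert (0 < / F m) by (apply Rinv_0_lt_compat, HF).
  assert (0 <= tail F (S m)) by now apply tail_nonneg. lra.
Qed.

Lemma tail_mono F m n : feedback F -> (m <= n)%nat -> tail F n <= tail F m.
Proof.
  intros HF H. induction H; [lra|].
  rewrite (tail_step F m0) in IHle by easy.
  assert (0 < / F m0) by (apply Rinv_0_lt_compat, HF). lra.
Qed.

Lemma round_bounds x : 0 <= x ->
  x - / 2 < INR (round_nat x) <= x + / 2.
Proof.
  intros Hx. unfold round_nat. destruct (archimed (x + /2)) as [H1 H2].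
  assert (Hu : (1 <= up (x + /2))%Z).
  { apply le_IZR. assert (0 < IZR (up (x + / 2))) by lra.
    apply lt_IZR in H. apply IZR_le. lia. }
  rewrite INR_IZR_INZ, Z2Nat.id by lia. rewrite minus_IZR. simpl. lra.
Qed.

Lemma up_mono x y : x <= y -> (up x <= up y)%Z.
Proof.
  intros H. destruct (archimed x) as [H1 H2]. destruct (archimed y) as [H3 H4].
  destruct (Z_le_gt_dec (up x) (up y)) as [|Hc]; [easy|].
  assert (IZR (up y) <= IZR (up x) - 1).
  { rewrite <- minus_IZR. apply IZR_le. lia. }
  lra.
Qed.

Lemma round_mono x y : x <= y -> (round_nat x <= round_nat y)%nat.
Proof.
  intros H. unfold round_nat. assert (H' := up_mono (x + /2) (y + /2) ltac:(lra)). lia.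
Qed.

Lemma key1 F C m : feedback F -> 0 < C ->
  (forall k, (m <= k)%nat -> tail F k <= C * INR k * / F k) ->
  forall n, INR n * tail F (m+n) <= C * INR (m+n) * (tail F m - tail F (m+n)).
Proof.
  intros HF HC H n. induction n as [|n IH].
  - rewrite Nat.add_0_r. simpl. lra.
  - replace (m + S n)%nat with (S (m+n)) by lia.
    set (a := (m+n)%nat) in *.
    rewrite (tail_step F a) in * by easy.
    assert (Ha := H a ltac:(lia)). rewrite (tail_step F a) in Ha by easy.
    assert (Hm := tail_mono F m a HF ltac:(lia)). rewrite (tail_step F a) in Hm by easy.
    assert (0 < / F a) by (apply Rinv_0_lt_compat, HF).
    assert (0 <= tail F (S a)) by now apply tail_nonneg.
    rewrite S_INR in *. rewrite S_INR.
    assert (0 <= INR a) by apply pos_INR.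
    set (T := tail F (S a)) in *. set (f := / F a) in *. set (tm := tail F m) in *.
    assert (C * INR a * (tm - (f+T)) <= C * (INR a + 1) * (tm - (f+T))) by nra.
    assert (C * INR a * f <= C * (INR a + 1) * f) by nra.
    nra.
Qed.

Lemma key2 F A m : feedback F -> 0 <= A ->
  (forall k, (m <= k)%nat -> A * INR k * / F k <= tail F k) ->
  forall n, A * INR m * (tail F m - tail F (m+n)) <= INR n * tail F m.
Proof.
  intros HF HA H n. induction n as [|n IH].
  - rewrite Nat.add_0_r. simpl. lra.
  - replace (m + S n)%nat with (S (m+n)) by lia.
    set (a := (m+n)%nat) in *.
    assert (Ha := H a ltac:(lia)).
    assert (Hm := tail_mono F m a HF ltac:(lia)).
    rewrite (tail_step F a) in * by easy.
    assert (0 < / F a) by (apply Rinv_0_lt_compat, HF).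
    assert (0 <= tail F (S a)) by now apply tail_nonneg.
    rewrite S_INR.
    assert (INR m <= INR a) by (apply le_INR; lia).
    assert (A * INR m * / F a <= A * INR a * / F a).
    { apply Rmult_le_compat_r; [lra|]. apply Rmult_le_compat_l; lra. }
    nra.
Qed.

Lemma ratio_close F A K m M : feedback F -> 0 < A -> 0 <= K -> (1 <= m)%nat -> (m <= M)%nat ->
  INR M - INR m <= K * INR m ->
  (forall k, (m <= k)%nat -> A * INR k * / F k <= tail F k) ->
  1 - K / A <= tail F M / tail F m <= 1.
Proof.
  intros HF HA HK H1 Hm HMm H.
  assert (Hk := key2 F A m HF ltac:(lra) H (M - m)).
  replace (m + (M - m))%nat with M in Hk by lia.
  rewrite minus_INR in Hk by lia.
  assert (Hp := tail_pos F m HF). assert (HpM := tail_pos F M HF).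
  assert (Hmo := tail_mono F m M HF Hm).
  assert (1 <= INR m) by (apply (le_INR 1); lia).
  split.
  - apply (Rmult_le_reg_r (tail F m)); [easy|].
    unfold Rdiv. rewrite Rmult_assoc, Rinv_l by lra. rewrite Rmult_1_r.
    apply (Rmult_le_reg_l A); [easy|].
    assert (A * (tail F m - tail F M) <= K * tail F m).
    { apply (Rmult_le_reg_l (INR m)); [lra|].
      assert ((INR M - INR m) * tail F m <= K * INR m * tail F m) by nra. nra. }
    rewrite Rmult_minus_distr_r, Rmult_minus_distr_l, Rmult_1_l.
    replace (A * (K * / A * tail F m)) with (K * tail F m) by (field; lra). lra.
  - apply (Rmult_le_reg_r (tail F m)); [easy|].
    unfold Rdiv. rewrite Rmult_assoc, Rinv_l by lra. lra.
Qed.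

Lemma lim_big F : feedback F ->
  is_lim_seq (fun k => / INR k * F k * tail F k) p_infty ->
  forall A, exists k0, forall k, (k0 <= k)%nat -> A * INR k * / F k <= tail F k.
Proof.
  intros HF Hl A. apply is_lim_seq_spec in Hl. destruct (Hl A) as [k0 Hk].
  exists (S k0). intros k Hk'. specialize (Hk k ltac:(lia)).
  assert (0 < INR k) by (apply lt_0_INR; lia).
  assert (0 < F k) by apply HF.
  apply (Rmult_le_reg_r (F k)); [easy|]. rewrite Rmult_assoc, Rinv_l by lra.
  rewrite Rmult_1_r.
  apply (Rmult_lt_compat_l (INR k)) in Hk; [|easy].
  replace (INR k * (/ INR k * F k * tail F k)) with (tail F k * F k) in Hk by (field; lra).
  lra.
Qed.

Lemma gsv F (m M : nat -> nat) : feedback F ->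
  is_lim_seq (fun k => / INR k * F k * tail F k) p_infty ->
  (forall B, eventually (fun N => B <= m N /\ B <= M N)%nat) ->
  (exists K, 0 < K /\ eventually (fun N => INR (M N) <= K * INR (m N) /\ INR (m N) <= K * INR (M N))) ->
  is_lim_seq (fun N => tail F (M N) / tail F (m N)) 1.
Proof.
  intros HF Hl H1 [K [HK [N2 H2]]].
  apply is_lim_seq_spec. intros eps.
  set (d := Rmin eps 1 / 4).
  assert (Hd0 : 0 < d) by (unfold d; assert (0 < Rmin eps 1) by (apply Rmin_pos; [apply cond_pos|lra]); lra).
  assert (Hd1 : d <= 1/4) by (unfold d; assert (Rmin eps 1 <= 1) by apply Rmin_r; lra).
  assert (Hd2 : d <= eps/4) by (unfold d; assert (Rmin eps 1 <= eps) by apply Rmin_l; lra).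
  destruct (lim_big F HF Hl (K / d)) as [k0 Hk0].
  destruct (H1 (max k0 1)) as [N1 HN1].
  exists (max N1 N2). intros N HN.
  destruct (HN1 N ltac:(lia)) as [Hm HM]. destruct (H2 N ltac:(lia)) as [E1 E2].
  assert (HKd : 0 < K / d) by (apply Rdiv_lt_0_compat; lra).
  assert (EKd : K / (K / d) = d) by (field; lra).
  assert (Hp := tail_pos F (m N) HF). assert (HpM := tail_pos F (M N) HF).
  assert (0 <= INR (m N)) by apply pos_INR. assert (0 <= INR (M N)) by apply pos_INR.
  destruct (le_lt_dec (m N) (M N)) as [Hle|Hlt].
  - assert (Hr := ratio_close F (K/d) K (m N) (M N) HF HKd ltac:(lra) ltac:(lia) Hle
       ltac:(lra) ltac:(intros k Hk; apply Hk0; lia)).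
    rewrite EKd in Hr. simpl. unfold ball; simpl. unfold AbsRing_ball, abs, minus, plus, opp; simpl.
    apply Rabs_lt_between. lra.
  - assert (Hr := ratio_close F (K/d) K (M N) (m N) HF HKd ltac:(lra) ltac:(lia) ltac:(lia)
       ltac:(lra) ltac:(intros k Hk; apply Hk0; lia)).
    rewrite EKd in Hr. simpl. unfold ball; simpl. unfold AbsRing_ball, abs, minus, plus, opp; simpl.
    apply Rabs_lt_between.
    set (r := tail F (m N) / tail F (M N)) in Hr.
    assert (E : tail F (M N) / tail F (m N) = / r) by (unfold r; field; lra).
    rewrite E. assert (0 < r) by lra.
    split.
    + assert (/ r >= 1). { apply Rle_ge. rewrite <- Rinv_1. apply Rinv_le_contravar; lra. }
      lra.
    + assert (/ r <= 1 + 2 * d).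
      { apply (Rmult_le_reg_l r); [lra|]. rewrite Rinv_r by lra. nra. }
      lra.
Qed.

Lemma rb (s t : nat -> R) a b : 0 < a ->
  eventually (fun N => a*INR N <= s N <= b*INR N /\ a*INR N <= t N <= b*INR N) ->
  (forall B, eventually (fun N => B <= round_nat (s N) /\ B <= round_nat (t N))%nat) /\
  (exists K, 0 < K /\ eventually (fun N => INR (round_nat (t N)) <= K * INR (round_nat (s N))
                                 /\ INR (round_nat (s N)) <= K * INR (round_nat (t N)))).
Proof.
  intros Ha [N0 H0]. split.
  - intros B. destruct (INR_unbounded ((INR B + 1) / a)) as [n Hn].
    exists (max N0 n). intros N HN. destruct (H0 N ltac:(lia)) as [[Hs1 Hs2] [Ht1 Ht2]].
    assert (INR n <= INR N) by (apply le_INR; lia).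
    assert (HaN : INR B + 1 < a * INR N).
    { apply (Rmult_lt_compat_l a) in Hn; [|easy].
      replace (a * ((INR B + 1) / a)) with (INR B + 1) in Hn by (field; lra). nra. }
    assert (0 <= INR N) by apply pos_INR.
    destruct (round_bounds (s N) ltac:(nra)) as [R1 _].
    destruct (round_bounds (t N) ltac:(nra)) as [R2 _].
    split; apply INR_le; lra.
  - destruct (INR_unbounded (1 / a)) as [n Hn].
    exists ((2*b + a)/a).
    assert (0 <= INR n) by apply pos_INR.
    assert (Hn1 : 1 < a * INR n).
    { apply (Rmult_lt_compat_l a) in Hn; [|easy].
      replace (a * (1 / a)) with 1 in Hn by (field; lra). lra. }
    destruct (H0 (max N0 n) ltac:(lia)) as [[Hs1 Hs2] _].
    assert (INR n <= INR (max N0 n)) by (apply le_INR; lia).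
    assert (HX : 0 < INR (max N0 n)) by nra.
    assert (Hab : a <= b) by (apply (Rmult_le_reg_r (INR (max N0 n))); lra).
    split. { apply Rdiv_lt_0_compat; lra. }
    exists (max N0 n). intros N HN. destruct (H0 N ltac:(lia)) as [[Hs1' Hs2'] [Ht1 Ht2]].
    assert (INR n <= INR N) by (apply le_INR; lia).
    assert (1 <= a * INR N) by nra.
    assert (0 <= INR N) by apply pos_INR.
    destruct (round_bounds (s N) ltac:(nra)) as [R1 R1'].
    destruct (round_bounds (t N) ltac:(nra)) as [R2 R2'].
    set (K := (2 * b + a) / a).
    assert (EK : K * (a * INR N / 2) = (b + a/2) * INR N) by (unfold K; field; lra).
    assert (0 < K) by (apply Rdiv_lt_0_compat; lra).
    split.
    + assert (K * (a * INR N / 2) <= K * INR (round_nat (s N))) by (apply Rmult_le_compat_l; lra).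
      nra.
    + assert (K * (a * INR N / 2) <= K * INR (round_nat (t N))) by (apply Rmult_le_compat_l; lra).
      nra.
Qed.

Lemma sv_lin F x y : feedback F ->
  is_lim_seq (fun k => / INR k * F k * tail F k) p_infty -> 0 < x -> 0 < y ->
  is_lim_seq (fun N => tailR F (y * INR N) / tailR F (x * INR N)) 1.
Proof.
  intros HF Hl Hx Hy. unfold tailR.
  destruct (rb (fun N => x * INR N) (fun N => y * INR N) (Rmin x y) (x + y)) as [H1 H2].
  { now apply Rmin_pos. }
  { exists O. intros N _. assert (0 <= INR N) by apply pos_INR.
    assert (Rmin x y <= x) by apply Rmin_l. assert (Rmin x y <= y) by apply Rmin_r.
    split; split; nra. }
  now apply (gsv F (fun N => round_nat (x * INR N)) (fun N => round_nat (y * INR N))).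
Qed.

Lemma phi_lemma Fi Fj ci cj (phi : nat -> nat) c1 c2 :
  feedback Fi -> feedback Fj ->
  is_lim_seq (fun k => / INR k * Fi k * tail Fi k) p_infty -> 0 < ci -> 0 < cj ->
  ratio_cond Fi Fj ci cj -> 0 < c1 ->
  eventually (fun N => c1 * INR N <= INR (phi N) <= c2 * INR N) ->
  is_lim_seq (fun N => tailR Fj (cj * INR (phi N)) / tailR Fj (cj * INR N)) 1.
Proof.
  intros HFi HFj Hl Hci Hcj HR Hc1 [N0 Hphi].
  assert (HG : is_lim_seq (fun N => tailR Fi (ci * INR (phi N)) / tailR Fi (ci * INR N)) 1).
  { unfold tailR.
    destruct (rb (fun N => ci * INR N) (fun N => ci * INR (phi N)) (ci * Rmin 1 c1) (ci * (1 + Rabs c2))) as [H1 H2].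
    { apply Rmult_lt_0_compat; [easy|]. apply Rmin_pos; lra. }
    { exists N0. intros N HN. destruct (Hphi N HN) as [P1 P2].
      assert (0 <= INR N) by apply pos_INR.
      assert (Rmin 1 c1 <= 1) by apply Rmin_l. assert (Rmin 1 c1 <= c1) by apply Rmin_r.
      assert (Rmin 1 c1 * INR N <= c1 * INR N) by nra.
      assert (c2 <= Rabs c2) by apply Rle_abs. assert (0 <= Rabs c2) by apply Rabs_pos.
      assert (c2 * INR N <= Rabs c2 * INR N) by nra.
      set (m := Rmin 1 c1) in *.
      assert (A1 : m * INR N <= INR N) by nra.
      assert (A2 : INR N <= (1 + Rabs c2) * INR N) by nra.
      assert (A3 : m * INR N <= INR (phi N)) by nra.
      assert (A4 : INR (phi N) <= (1 + Rabs c2) * INR N) by nra.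
      rewrite !Rmult_assoc.
      repeat split; apply Rmult_le_compat_l; lra. }
    now apply (gsv Fi (fun N => round_nat (ci * INR N)) (fun N => round_nat (ci * INR (phi N)))). }
  assert (Hsub : is_lim_seq (fun N => tailR Fi (ci * INR (phi N)) / tailR Fj (cj * INR (phi N))) 1).
  { apply (is_lim_seq_subseq (fun N => tailR Fi (ci * INR N) / tailR Fj (cj * INR N))); [|exact HR].
    intros P [M HM]. destruct (INR_unbounded (INR M / c1)) as [n Hn].
    exists (max N0 n). intros N HN. apply HM. destruct (Hphi N ltac:(lia)) as [P1 _].
    assert (INR n <= INR N) by (apply le_INR; lia).
    apply INR_le. apply (Rmult_lt_compat_l c1) in Hn; [|easy].
    replace (c1 * (INR M / c1)) with (INR M) in Hn by (field; lra). nra. }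
  assert (Hprod := is_lim_seq_mult' _ _ _ _ HG HR).
  assert (Hinv := is_lim_seq_inv _ _ Hsub ltac:(simpl; intro E; injection E; lra)).
  assert (Hall := is_lim_seq_mult' _ _ _ _ Hprod Hinv).
  simpl in Hall. replace (1 * 1 * / 1) with 1 in Hall by field.
  revert Hall. apply is_lim_seq_ext. intros N. unfold tailR.
  assert (H1 := tail_pos Fi (round_nat (ci * INR (phi N))) HFi).
  assert (H2 := tail_pos Fi (round_nat (ci * INR N)) HFi).
  assert (H3 := tail_pos Fj (round_nat (cj * INR (phi N))) HFj).
  assert (H4 := tail_pos Fj (round_nat (cj * INR N)) HFj).
  field. lra.
Qed.

Definition flr (x : R) : nat := Z.to_nat (up x - 1).

Lemma flr_bounds x : 0 <= x -> INR (flr x) <= x < INR (flr x) + 1.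
Proof.
  intros Hx. unfold flr. destruct (archimed x) as [H1 H2].
  assert (Hu : (1 <= up x)%Z).
  { assert (0 < IZR (up x)) by lra. apply lt_IZR in H. lia. }
  rewrite INR_IZR_INZ, Z2Nat.id by lia. rewrite minus_IZR. simpl. lra.
Qed.

Lemma part2 Fi Fj ci cj a b :
  feedback Fi -> feedback Fj ->
  is_lim_seq (fun k => / INR k * Fi k * tail Fi k) p_infty -> 0 < ci -> 0 < cj ->
  ratio_cond Fi Fj ci cj -> 0 < a -> 0 < b -> ratio_cond Fi Fj a b.
Proof.
  intros HFi HFj Hl Hci Hcj HR Ha Hb.
  set (c := b / cj).
  assert (Hc : 0 < c) by (apply Rdiv_lt_0_compat; lra).
  assert (Hcb : cj * c = b) by (unfold c; field; lra).
  set (p1 := fun N => flr (c * INR N)).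
  set (p2 := fun N => S (flr (c * INR N))).
  destruct (INR_unbounded (2 / c)) as [n0 Hn0].
  assert (Hev : forall N, (n0 <= N)%nat -> 2 <= c * INR N).
  { intros N HN. assert (INR n0 <= INR N) by (apply le_INR; lia).
    apply (Rmult_lt_compat_l c) in Hn0; [|easy].
    replace (c * (2 / c)) with 2 in Hn0 by (field; lra). nra. }
  assert (HU := phi_lemma Fi Fj ci cj p1 (c/2) (2*c) HFi HFj Hl Hci Hcj HR ltac:(lra)
    ltac:(exists n0; intros N HN; specialize (Hev N HN); unfold p1;
          destruct (flr_bounds (c * INR N) ltac:(lra)); assert (0 <= INR N) by apply pos_INR;
          split; nra)).
  assert (HL := phi_lemma Fi Fj ci cj p2 (c/2) (2*c) HFi HFj Hl Hci Hcj HR ltac:(lra)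
    ltac:(exists n0; intros N HN; specialize (Hev N HN); unfold p2; rewrite S_INR;
          destruct (flr_bounds (c * INR N) ltac:(lra)); assert (0 <= INR N) by apply pos_INR;
          split; nra)).
  assert (HQ : is_lim_seq (fun N => tailR Fj (b * INR N) / tailR Fj (cj * INR N)) 1).
  { refine (is_lim_seq_le_le_loc _ _ _ 1 _ HL HU).
    exists O. intros N _. unfold p1, p2, tailR.
    assert (0 <= INR N) by apply pos_INR.
    destruct (flr_bounds (c * INR N) ltac:(nra)) as [B1 B2].
    assert (H4 := tail_pos Fj (round_nat (cj * INR N)) HFj).
    assert (E1 : cj * INR (flr (c * INR N)) <= b * INR N).
    { rewrite <- Hcb, Rmult_assoc. apply Rmult_le_compat_l; lra. }
    assert (E2 : b * INR N <= cj * INR (S (flr (c * INR N)))).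
    { rewrite <- Hcb, Rmult_assoc, S_INR. apply Rmult_le_compat_l; lra. }
    apply round_mono in E1. apply round_mono in E2.
    apply (tail_mono Fj) in E1; [|easy]. apply (tail_mono Fj) in E2; [|easy].
    split; unfold Rdiv; apply Rmult_le_compat_r; try lra; left; now apply Rinv_0_lt_compat. }
  assert (HS := sv_lin Fi ci a HFi Hl Hci Ha).
  assert (Hprod := is_lim_seq_mult' _ _ _ _ HS HR).
  assert (Hinv := is_lim_seq_inv _ _ HQ ltac:(simpl; intro E; injection E; lra)).
  assert (Hall := is_lim_seq_mult' _ _ _ _ Hprod Hinv).
  simpl in Hall. replace (1 * 1 * / 1) with 1 in Hall by field.
  unfold ratio_cond. revert Hall. apply is_lim_seq_ext. intros N. unfold tailR.
  assert (H1 := tail_pos Fi (round_nat (a * INR N)) HFi).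
  assert (H2 := tail_pos Fi (round_nat (ci * INR N)) HFi).
  assert (H3 := tail_pos Fj (round_nat (b * INR N)) HFj).
  assert (H4 := tail_pos Fj (round_nat (cj * INR N)) HFj).
  field. lra.
Qed.

Lemma big_nat (x y : R) : 0 < x -> exists n0, forall N, (n0 <= N)%nat -> y <= x * INR N.
Proof.
  intros Hx. destruct (INR_unbounded (y / x)) as [n0 Hn0]. exists n0. intros N HN.
  assert (INR n0 <= INR N) by (apply le_INR; lia).
  apply (Rmult_lt_compat_l x) in Hn0; [|easy].
  replace (x * (y / x)) with y in Hn0 by (field; lra). nra.
Qed.

Lemma part1 Fi Fj ci cj :
  feedback Fi -> feedback Fj -> 0 < ci -> 0 < cj -> ratio_cond Fi Fj ci cj ->
  (exists C : R, forall k : nat, (1 <= k)%nat -> / INR k * Fi k * tail Fi k <= C) ->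
  forall eps : R, 0 < eps ->
    Rbar_lt (LimSup_seq (fun N => tailR Fi ((ci + eps) * INR N) / tailR Fj (cj * INR N))) (Finite 1).
Proof.
  intros HFi HFj Hci Hcj HR [C HC] eps Heps.
  assert (HC0 : 0 < C).
  { specialize (HC 1%nat ltac:(lia)). simpl in HC.
    assert (0 < Fi 1%nat) by apply HFi. assert (0 < tail Fi 1) by now apply tail_pos.
    rewrite Rinv_1 in HC. nra. }
  assert (Hk : forall k, (1 <= k)%nat -> tail Fi k <= C * INR k * / Fi k).
  { intros k Hk1. specialize (HC k Hk1).
    assert (0 < INR k) by (apply lt_0_INR; lia). assert (0 < Fi k) by apply HFi.
    apply (Rmult_le_compat_l (INR k * / Fi k)) in HC;
      [|apply Rmult_le_pos; [lra| left; now apply Rinv_0_lt_compat]].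
    replace (INR k * / Fi k * (/ INR k * Fi k * tail Fi k)) with (tail Fi k) in HC by (field; lra).
    lra. }
  set (d0 := eps / (4 * (ci + eps))).
  assert (Hd0 : 0 < d0) by (unfold d0; apply Rdiv_lt_0_compat; lra).
  set (q := C / (C + d0)).
  assert (Hq0 : 0 < q) by (unfold q; apply Rdiv_lt_0_compat; lra).
  assert (Hq1 : q < 1).
  { unfold q. apply (Rmult_lt_reg_r (C + d0)); [lra|]. unfold Rdiv.
    rewrite Rmult_assoc, Rinv_l by lra. lra. }
  assert (He : 0 < (1 - q) / (2 * q)) by (apply Rdiv_lt_0_compat; lra).
  apply is_lim_seq_spec in HR. destruct (HR (mkposreal _ He)) as [NR HNR].
  destruct (big_nat eps 2 Heps) as [n1 Hn1].
  destruct (big_nat ci (3/2) Hci) as [n2 Hn2].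
  apply (Rbar_le_lt_trans _ (LimSup_seq (fun _ => (1 + q) / 2))).
  2: { rewrite LimSup_seq_const. simpl. lra. }
  apply LimSup_le. exists (max NR (max n1 n2)). intros N HN.
  specialize (HNR N ltac:(lia)). specialize (Hn1 N ltac:(lia)). specialize (Hn2 N ltac:(lia)).
  simpl in HNR. unfold ball in HNR; simpl in HNR. unfold AbsRing_ball, abs, minus, plus, opp in HNR; simpl in HNR.
  apply Rabs_lt_between in HNR.
  unfold tailR in *.
  set (m := round_nat (ci * INR N)) in *.
  set (M := round_nat ((ci + eps) * INR N)) in *.
  assert (HN0 : 0 <= INR N) by apply pos_INR.
  destruct (round_bounds (ci * INR N) ltac:(nra)) as [Rm1 Rm2]. fold m in Rm1, Rm2.
  destruct (round_bounds ((ci + eps) * INR N) ltac:(nra)) as [RM1 RM2]. fold M in RM1, RM2.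
  assert (Hm1 : (1 <= m)%nat) by (apply INR_le; simpl; lra).
  assert (HmM : (m <= M)%nat) by (apply round_mono; nra).
  assert (Hkey := key1 Fi C m HFi HC0 ltac:(intros k Hk'; apply Hk; lia) (M - m)).
  replace (m + (M - m))%nat with M in Hkey by lia. rewrite minus_INR in Hkey by lia.
  assert (HTm := tail_pos Fi m HFi). assert (HTM := tail_pos Fi M HFi).
  assert (HTj := tail_pos Fj (round_nat (cj * INR N)) HFj).
  assert (HMpos : 0 < INR M) by (apply (lt_INR 0); lia).
  assert (HD : d0 * INR M <= INR M - INR m).
  { assert (d0 * INR M <= d0 * (2 * (ci + eps) * INR N)) by (apply Rmult_le_compat_l; nra).
    assert (d0 * (2 * (ci + eps) * INR N) = eps * INR N / 2) by (unfold d0; field; lra).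
    lra. }
  assert (Hratio : tail Fi M <= q * tail Fi m).
  { assert (d0 * INR M * tail Fi M <= (INR M - INR m) * tail Fi M) by (apply Rmult_le_compat_r; lra).
    assert (d0 * tail Fi M <= C * (tail Fi m - tail Fi M)).
    { apply (Rmult_le_reg_l (INR M)); [lra|]. nra. }
    unfold q. apply (Rmult_le_reg_l (C + d0)); [lra|].
    replace ((C + d0) * (C / (C + d0) * tail Fi m)) with (C * tail Fi m) by (field; lra). nra. }
  set (Rn := tail Fi m / tail Fj (round_nat (cj * INR N))) in HNR.
  assert (E : tail Fi M / tail Fj (round_nat (cj * INR N)) = (tail Fi M / tail Fi m) * Rn)
    by (unfold Rn; field; lra).
  rewrite E.
  assert (Hr : tail Fi M / tail Fi m <= q).
  { apply (Rmult_le_reg_r (tail Fi m)); [lra|]. unfold Rdiv.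
    rewrite Rmult_assoc, Rinv_l by lra. lra. }
  assert (0 <= tail Fi M / tail Fi m) by (apply Rdiv_le_0_compat; lra).
  assert (HRn : Rn <= 1 + (1 - q) / (2 * q)) by lra.
  assert (q * (1 + (1 - q) / (2 * q)) = (1 + q) / 2) by (field; lra).
  assert (0 < Rn) by (unfold Rn; apply Rdiv_lt_0_compat; lra).
  apply (Rle_trans _ (q * Rn)); [apply Rmult_le_compat_r; lra|].
  apply (Rle_trans _ (q * (1 + (1 - q) / (2 * q)))); [apply Rmult_le_compat_l; lra|]. lra.
Qed.

Theorem mainTheorem7 (Fi Fj : nat -> R) (chi_i chi_j : R) :
  feedback Fi -> feedback Fj ->
  0 < chi_i -> 0 < chi_j -> chi_i + chi_j <= 1 ->
  ratio_cond Fi Fj chi_i chi_j ->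
  ((exists C : R, forall k : nat, (1 <= k)%nat ->
       / INR k * Fi k * tail Fi k <= C) ->
     forall eps : R, 0 < eps ->
       Rbar_lt
         (LimSup_seq (fun N => tailR Fi ((chi_i + eps) * INR N)
                               / tailR Fj (chi_j * INR N)))
         (Finite 1))
  /\
  (is_lim_seq (fun k => / INR k * Fi k * tail Fi k) p_infty ->
     forall a b : R, 0 < a -> 0 < b -> a + b <= 1 ->
       ratio_cond Fi Fj a b).
Proof.
  intros HFi HFj Hci Hcj _ HR. split.
  - now apply part1.
  - intros Hl a b Ha Hb _. now apply (part2 Fi Fj chi_i chi_j).
Qed.
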